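(* Let $T:X\rightrightarrows X^*$ be a pseudomonotone operator with $\mathrm{dom}(T)$ convex. Then $(\widehat{T})^\rho_D=T^\rho_D$.
   Context: $X$ is a real Banach space with dual $X^*$ and pairing $\langle x,x^*\rangle=x^*(x)$. A multivalued operator $T:X\rightrightarrows X^*$ is identified with its graph $T\subset X\times X^*$; $T(x)=\{x^*:(x,x^* )\in T\}$, $\mathrm{dom}(T)=\{x:T(x)\ne\emptyset\}$, $Z_T=\{x:0\in T(x)\}$. For $A\subset X^*$, $\operatorname{cone}_\circ(A)=\{tv:t>0,v\in A\}$. For $C\subset X$, $N_C(x)=\{x^*: \langle y-x,x^*\rangle\le0\ \forall y\in C\}$. For $(x,x^* ),(y,y^* )\in X\times X^*$, write $(x,x^* )\sim_p(y,y^* )$ if either $\min\{\langle x-y,y^*\rangle,\langle y-x,x^*\rangle\}<0$ or $\langle x-y,y^*\rangle=\langle y-x,x^*\rangle=0$. The pseudomonotone polar is $T^\rho=\{(x,x^* ): (x,x^* )\sim_p(y,y^* )\ \forall (y,y^* )\in T\}$, and $T^\rho_D$ denotes its restriction to $\mathrm{dom}(T)$; likewise $(\widehat T)^\rho_D$ is the restriction of $(\widehat T)^\rho$ to $\mathrm{dom}(\widehat T)=\mathrm{dom}(T)$. $T$ is pseudomonotone if for all $(x,x^* ),(y,y^* )\in T$, $\langle y-x,x^*\rangle\ge0$ implies $\langle y-x,y^*\rangle\ge0$. For $x\in Z_T$, $L(T,x)=\{y\in X:\exists y^*\in T(y),\ \langle x-y,y^*\rangle\ge0\}$, and $\widehat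 T(x)=N_{L(T,x)}(x)$ if $x\in Z_T$, $\widehat T(x)=\operatorname{cone}_\circ(T(x))$ if $x\in\mathrm{dom}(T)\setminus Z_T$, $\widehat T(x)=\emptyset$ if $x\notin\mathrm{dom}(T)$. *)

(* Defs.v *)
From Stdlib Require Import Reals Lra.
Open Scope R_scope.

Record BanachSpace := {
  carrier :> Type;
  vadd : carrier -> carrier -> carrier;
  vopp : carrier -> carrier;
  vzero : carrier;
  vscal : R -> carrier -> carrier;
  norm : carrier -> R;
  vadd_assoc : forall x y z, vadd x (vadd y z) = vadd (vadd x y) z;
  vadd_comm : forall x y, vadd x y = vadd y x;
  vadd_0 : forall x, vadd x vzero = x;
  vadd_opp : forall x, vadd x (vopp x) = vzero;
  vscal_1 : forall x, vscal 1 x = x;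
  vscal_assoc : forall a b x, vscal a (vscal b x) = vscal (a * b) x;
  vscal_distr_v : forall a x y, vscal a (vadd x y) = vadd (vscal a x) (vscal a y);
  vscal_distr_s : forall a b x, vscal (a + b) x = vadd (vscal a x) (vscal b x);
  norm_eq0 : forall x, norm x = 0 -> x = vzero;
  norm_triangle : forall x y, norm (vadd x y) <= norm x + norm y;
  norm_scal : forall a x, norm (vscal a x) = Rabs a * norm x;
  complete : forall u : nat -> carrier,
    (forall eps, eps > 0 -> exists N, forall m n, (m >= N)%nat -> (n >= N)%nat ->
        norm (vadd (u m) (vopp (u n))) < eps) ->
    exists l, forall eps, eps > 0 -> exists N, forall n, (n >= N)%nat ->
        norm (vadd (u n) (vopp l)) < eps
}.

Arguments vadd {_}. Arguments vopp {_}. Arguments vzero {_}.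
Arguments vscal {_}. Arguments norm {_}.

Definition vsub {X : BanachSpace} (x y : X) : X := vadd x (vopp y).

Record dual (X : BanachSpace) := {
  dfun :> X -> R;
  dfun_add : forall x y, dfun (vadd x y) = dfun x + dfun y;
  dfun_scal : forall a x, dfun (vscal a x) = a * dfun x;
  dfun_bounded : exists M, forall x, Rabs (dfun x) <= M * norm x
}.
Arguments dfun {X}.

Definition pairing {X : BanachSpace} (x : X) (xs : dual X) : R := dfun xs x.

Definition dzero (X : BanachSpace) : dual X.
Proof.
  refine {| dfun := fun _ => 0 |}.
  - intros; ring.
  - intros; ring.
  - exists 0; intros x; rewrite Rabs_R0; lra.
Defined.

Definition dscal {X : BanachSpace} (t : R) (v : dual X) : dual X.
Proof.
  refine {| dfun := fun x => t * v x |}.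
  - intros; rewrite dfun_add; ring.
  - intros; rewrite dfun_scal; ring.
  - destruct (dfun_bounded X v) as [M HM]. exists (Rabs t * M). intros x.
    rewrite Rabs_mult, Rmult_assoc. apply Rmult_le_compat_l; [apply Rabs_pos | apply HM].
Defined.

(* multivalued operators, identified with their graphs *)
Definition Operator (X : BanachSpace) := X -> dual X -> Prop.

Definition dom {X : BanachSpace} (T : Operator X) (x : X) : Prop :=
  exists xs, T x xs.

Definition zeros {X : BanachSpace} (T : Operator X) (x : X) : Prop :=
  T x (dzero X).

Definition convex {X : BanachSpace} (C : X -> Prop) : Prop :=
  forall x y t, C x -> C y -> 0 <= t <= 1 ->
    C (vadd (vscal t x) (vscal (1 - t) y)).

Definition cone_o {X : BanachSpace} (A : dual X -> Prop) (w : dual X) : Prop :=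
  exists t v, t > 0 /\ A v /\ w = dscal t v.

Definition normal_cone {X : BanachSpace} (C : X -> Prop) (x : X) (xs : dual X) : Prop :=
  forall y, C y -> pairing (vsub y x) xs <= 0.

Definition sim_p {X : BanachSpace} (x : X) (xs : dual X) (y : X) (ys : dual X) : Prop :=
  Rmin (pairing (vsub x y) ys) (pairing (vsub y x) xs) < 0 \/
  (pairing (vsub x y) ys = 0 /\ pairing (vsub y x) xs = 0).

Definition polar {X : BanachSpace} (T : Operator X) : Operator X :=
  fun x xs => forall y ys, T y ys -> sim_p x xs y ys.

Definition polarD {X : BanachSpace} (T : Operator X) : Operator X :=
  fun x xs => dom T x /\ polar T x xs.

Definition pseudomonotone {X : BanachSpace} (T : Operator X) : Prop :=
  forall x xs y ys, T x xs -> T y ys ->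
    pairing (vsub y x) xs >= 0 -> pairing (vsub y x) ys >= 0.

Definition Lset {X : BanachSpace} (T : Operator X) (x : X) (y : X) : Prop :=
  exists ys, T y ys /\ pairing (vsub x y) ys >= 0.

Definition That {X : BanachSpace} (T : Operator X) : Operator X :=
  fun x xs =>
    (zeros T x /\ normal_cone (Lset T x) x xs) \/
    (dom T x /\ ~ zeros T x /\ cone_o (T x) xs).

(* Main.v *)
Require Import Defs.
From Stdlib Require Import Reals.
From Stdlib Require Import Lra.
Open Scope R_scope.

Lemma dzero_val (X : BanachSpace) (f : dual X) : dfun f vzero = 0.
Proof.
  pose proof (dfun_add X f vzero vzero) as H. rewrite vadd_0 in H. lra.
Qed.

Lemma dopp (X : BanachSpace) (f : dual X) (y : X) : dfun f (vopp y) = - dfun f y.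
Proof.
  pose proof (dfun_add X f y (vopp y)) as H. rewrite vadd_opp, dzero_val in H. lra.
Qed.

Lemma pv (X : BanachSpace) (f : dual X) (a b : X) :
  pairing (vsub a b) f = dfun f a - dfun f b.
Proof. unfold pairing, vsub. rewrite dfun_add, dopp. ring. Qed.

Lemma pscal (X : BanachSpace) (t : R) (f : dual X) (a : X) :
  dfun (dscal t f) a = t * dfun f a.
Proof. reflexivity. Qed.

Lemma sim_p_scal (X : BanachSpace) x xs y (ys : dual X) t :
  t > 0 -> sim_p x xs y ys -> sim_p x xs y (dscal t ys).
Proof.
  intros Ht H. unfold sim_p in *. rewrite !pv in *. rewrite !pscal.
  destruct H as [H|[H1 H2]].
  - left. unfold Rmin in *.
    destruct (Rle_dec (dfun ys x - dfun ys y) (dfun xs y - dfun xs x));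
    destruct (Rle_dec (t * dfun ys x - t * dfun ys y) (dfun xs y - dfun xs x)); nra.
  - right. split; nra.
Qed.

Lemma sim_p_unscal (X : BanachSpace) x xs y (ys : dual X) :
  sim_p x xs y (dscal 1 ys) -> sim_p x xs y ys.
Proof.
  unfold sim_p. rewrite !pv, !pscal. rewrite !Rmult_1_l. auto.
Qed.

Theorem mainTheorem14 (X : BanachSpace) (T : Operator X) :
  pseudomonotone T -> convex (dom T) ->
  forall (x : X) (xs : dual X), polarD (That T) x xs <-> polarD T x xs.
Proof.
  intros Hpm Hcv x xs. split.
  - intros [Hd Hp]. split.
    + destruct Hd as [w [[Hz _]|[Hd _]]]; [exists (dzero X); exact Hz | exact Hd].
    + intros y ys Hy.
      destruct (Classical_Prop.classic (zeros T y)) as [Hz|Hnz].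
      * apply Hp. left. split; [exact Hz|].
        intros z [zs [Hzs Hge]]. rewrite pv.
        pose proof (Hpm z zs y ys Hzs Hy Hge) as H. rewrite pv in H. lra.
      * apply sim_p_unscal. apply Hp. right. split; [exists ys; exact Hy|].
        split; [exact Hnz|]. exists 1, ys. split; [lra|split; auto].
  - intros [Hd Hp]. split.
    + destruct (Classical_Prop.classic (zeros T x)) as [Hz|Hnz].
      * exists (dzero X). left. split; [exact Hz|]. intros z _. rewrite pv. simpl. lra.
      * destruct Hd as [w Hw]. exists (dscal 1 w). right. split; [exists w; exact Hw|].
        split; [exact Hnz|]. exists 1, w. split; [lra|split; auto].
    + intros y ys [[Hz Hn]|[Hdy [Hnz [t [v [Ht [Hv ->]]]]]]].
      * pose proof (Hp y (dzero X) Hz) as H0. unfold sim_p in H0. rewrite !pv in H0.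
        simpl in H0. unfold Rmin in H0.
        assert (Hb : dfun xs y - dfun xs x <= 0).
        { destruct (Rle_dec (0 - 0) (dfun xs y - dfun xs x)); lra. }
        destruct (Rlt_dec (dfun xs y - dfun xs x) 0) as [Hlt|Hge].
        { left. unfold Rmin. rewrite !pv.
          destruct (Rle_dec (dfun ys x - dfun ys y) (dfun xs y - dfun xs x)); lra. }
        assert (Hb0 : dfun xs y - dfun xs x = 0) by lra.
        destruct Hd as [xs' Hxs'].
        assert (Hdz : dom T y) by (exists (dzero X); exact Hz).
        pose proof (Hcv x y (1/2) (ex_intro _ xs' Hxs') Hdz ltac:(lra)) as [zs Hzs].
        set (z := vadd (vscal (1/2) x) (vscal (1 - 1/2) y)) in *.
        assert (Ez : forall f : dual X, dfun f z = 1/2 * dfun f x + 1/2 * dfun f y).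
        { intro f. unfold z. rewrite dfun_add, !dfun_scal. lra. }
        assert (Hge0 : pairing (vsub z y) zs >= 0).
        { apply (Hpm y (dzero X) z zs Hz Hzs). rewrite pv. simpl. lra. }
        rewrite pv, Ez in Hge0.
        pose proof (Hp z zs Hzs) as Hs. unfold sim_p in Hs. rewrite !pv, !Ez in Hs.
        assert (Hzz : dfun zs x - dfun zs y = 0).
        { unfold Rmin in Hs.
          destruct (Rle_dec (dfun zs x - (1 / 2 * dfun zs x + 1 / 2 * dfun zs y))
                     (1 / 2 * dfun xs x + 1 / 2 * dfun xs y - dfun xs x)); lra. }
        assert (HL : Lset T y z).
        { exists zs. split; [exact Hzs|]. rewrite pv, Ez. lra. }
        pose proof (Hn z HL) as Hnz. rewrite pv, Ez in Hnz.
        destruct (Rlt_dec (dfun ys x - dfun ys y) 0).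
        { left. unfold Rmin. rewrite !pv.
          destruct (Rle_dec (dfun ys x - dfun ys y) (dfun xs y - dfun xs x)); lra. }
        right. rewrite !pv. split; lra.
      * apply sim_p_scal; [exact Ht|]. apply Hp. exact Hv.
Qed.
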